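(* Let $f\in\mathcal{V}$ and let $\mathcal{C},\mathcal{D}\subseteq\mathbb{R}^n$ be convex cones such that $f$ is positive definite with respect to $\mathcal{C}$ and $\mathcal{C}^-\cap\operatorname{cl}(\mathcal{D})=\{0\}$. Then $(f|_{\mathcal{C}})^\star\in\mathcal{V}$ and $(f|_{\mathcal{C}})^\star$ is positive definite with respect to $\mathcal{D}$.
   Context: Functions are extended real-valued $f:\mathbb{R}^n\to\mathbb{R}\cup\{\pm\infty\}$; $f$ is convex/closed if its epigraph $\{(x,\alpha)\mid \alpha\ge f(x)\}$ is convex/closed. $f$ is positively homogeneous of degree 2 if $f(\lambda x)=\lambda^2 f(x)$ for all $\lambda\ge0$, $x\in\mathbb{R}^n$; $f$ is positive semi-definite if $f(0)=0$ and $f(x)\ge0$ for all $x$. $\mathcal{V}$ is the set of all extended real-valued functions on $\mathbb{R}^n$ that are closed, convex, positive semi-definite and positively homogeneous of degree 2. A convex cone is a nonempty convex set closed under nonnegative scalar multiplication. For a convex cone $\mathcal{C}$, $f\in\mathcal{V}$ is positive definite with respect to $\mathcal{C}$ if there exist $0<\alpha\le\beta<\infty$ with $\alpha\|x\|^2\le f(x)\le\beta\|x\|^2$ for all $x\in\mathcal{C}$. The restriction is $f|_{\mathcal{C}}(x)=f(x)+\delta(x\mid\mathcal{C})$, where $\delta(x\mid\mathcal{C})=0$ if $x\in\mathcal{C}$ and $+\infty$ otherwise. The convex conjugate is $f^\star(y)=\sup_{x\in\mathbb{R}^n}\{y\cdot x-f(x)\}$. $\mathcal{C}^-=\{y\mid\langle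 x,y\rangle\le0\ \forall x\in\mathcal{C}\}$ is the negative polar cone and $\operatorname{cl}$ denotes closure. *)

(* Defs.v *)
From HB Require Import structures.
From mathcomp Require Import all_boot all_order all_algebra.
From mathcomp Require Import all_classical all_reals all_analysis.
Set Implicit Arguments. Unset Strict Implicit. Unset Printing Implicit Defensive.
Import Order.TTheory GRing.Theory Num.Theory.
Import numFieldNormedType.Exports.
Local Open Scope classical_set_scope.
Local Open Scope ring_scope.

Section Defs.
Variables (R : realType) (n : nat).
Local Notation V := 'rV[R]_n.

Definition dotp (x y : V) : R := \sum_(i < n) x ord0 i * y ord0 i.
Definition sqnorm (x : V) : R := dotp x x.

Definition epigraph (f : V -> \bar R) : set (V * R) :=
  [set p | (f p.1 <= p.2%:E)%E].

Definition ext_convex (f : V -> \bar R) : Prop :=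
  forall p q, epigraph f p -> epigraph f q -> forall t : R, 0 <= t <= 1 ->
    epigraph f (t *: p.1 + (1 - t) *: q.1, t * p.2 + (1 - t) * q.2).

Definition ext_closed (f : V -> \bar R) : Prop := closed (epigraph f).

Definition psd (f : V -> \bar R) : Prop :=
  f 0 = 0%E /\ forall x, (0 <= f x)%E.

Definition pos_hom2 (f : V -> \bar R) : Prop :=
  forall (l : R) (x : V), 0 <= l -> f (l *: x) = ((l ^+ 2)%:E * f x)%E.

Definition classV (f : V -> \bar R) : Prop :=
  ext_closed f /\ ext_convex f /\ psd f /\ pos_hom2 f.

Definition cvx_set (A : set V) : Prop :=
  forall x y, A x -> A y -> forall t : R, 0 <= t <= 1 -> A (t *: x + (1 - t) *: y).

Definition convex_cone (C : set V) : Prop :=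
  C !=set0 /\ cvx_set C /\ forall (l : R) x, 0 <= l -> C x -> C (l *: x).

Definition posdef_wrt (f : V -> \bar R) (C : set V) : Prop :=
  exists alpha beta : R, 0 < alpha /\ alpha <= beta /\
    forall x, C x -> ((alpha * sqnorm x)%:E <= f x /\ f x <= (beta * sqnorm x)%:E)%E.

Definition cone_indicator (C : set V) (x : V) : \bar R :=
  if `[< C x >] then 0%E else +oo%E.

Definition restr_cone (f : V -> \bar R) (C : set V) : V -> \bar R :=
  fun x => (f x + cone_indicator C x)%E.

Definition cvx_conj (f : V -> \bar R) : V -> \bar R :=
  fun y => ereal_sup [set ((dotp y x)%:E - f x)%E | x in [set: V]].

Definition neg_polar (C : set V) : set V :=
  [set y | forall x, C x -> dotp x y <= 0].

End Defs.

(* Main.v *)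
Require Import Defs.
From HB Require Import structures.
From mathcomp Require Import all_boot all_order all_algebra.
From mathcomp Require Import all_classical all_reals all_analysis.
From mathcomp Require Import ring lra.
Import Order.TTheory GRing.Theory Num.Theory.
Import numFieldNormedType.Exports.
Local Open Scope classical_set_scope.
Local Open Scope ring_scope.
Set Implicit Arguments. Unset Strict Implicit.

Section Dot.
Variables (R : realType) (n : nat).
Local Notation V := 'rV[R]_n.
Implicit Types x y z : V.

Lemma dotpC x y : dotp x y = dotp y x.
Proof. by rewrite /dotp; apply: eq_bigr => i _; rewrite mulrC. Qed.

Lemma dotpDl x y z : dotp (x + y) z = dotp x z + dotp y z.
Proof. by rewrite /dotp -big_split; apply: eq_bigr => i _; rewrite mxE mulrDl. Qed.

Lemma dotpZl (a : R) x z : dotp (a *: x) z = a * dotp x z.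
Proof. by rewrite /dotp mulr_sumr; apply: eq_bigr => i _; rewrite mxE mulrA. Qed.

Lemma dotpZr (a : R) x z : dotp z (a *: x) = a * dotp z x.
Proof. by rewrite dotpC dotpZl dotpC. Qed.

Lemma dotp0l x : dotp 0 x = 0.
Proof. by rewrite /dotp big1 // => i _; rewrite mxE mul0r. Qed.

Lemma sqnorm_ge0 x : 0 <= sqnorm x.
Proof. by rewrite /sqnorm /dotp sumr_ge0 // => i _; rewrite -expr2 sqr_ge0. Qed.

Lemma sqnormZ (a : R) x : sqnorm (a *: x) = a ^+ 2 * sqnorm x.
Proof. by rewrite /sqnorm dotpZl dotpZr mulrA expr2. Qed.

Lemma sqnorm0 : sqnorm (0 : V) = 0.
Proof. by rewrite /sqnorm dotp0l. Qed.

Lemma sqnorm_eq0_dotp x y : sqnorm x = 0 -> dotp x y = 0.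
Proof.
move=> /eqP; rewrite /sqnorm /dotp psumr_eq0; last by move=> i _; rewrite -expr2 sqr_ge0.
move=> /allP H; rewrite big1 // => i _.
have := H i (mem_index_enum i); rewrite implyTb mulf_eq0 orbb => /eqP ->.
by rewrite mul0r.
Qed.

Lemma young_ineq (a : R) x y : 0 < a -> dotp y x - a * sqnorm x <= sqnorm y / (4 * a).
Proof.
move=> a0; rewrite /sqnorm /dotp mulr_sumr mulr_suml -sumrB ler_sum // => i _.
set p := y ord0 i; set q := x ord0 i.
rewrite ler_pdivlMr ?mulr_gt0 //.
have : 0 <= (p - 2 * a * q) ^+ 2 by rewrite sqr_ge0.
nra.
Qed.


Lemma cont_sum (s : seq 'I_n) (G : 'I_n -> V -> R) :
  (forall i, continuous (G i)) -> continuous (fun v => \sum_(i <- s) G i v).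
Proof.
move=> HG; elim: s => [|a s IH].
  under eq_fun do rewrite big_nil; exact: cst_continuous.
under eq_fun do rewrite big_cons.
by move=> v; apply: continuousD; [exact: HG | exact: IH].
Qed.

Lemma dotp_cont x : continuous (fun v : V => dotp v x).
Proof.
apply: cont_sum => i v; apply: continuousM; first exact: coord_continuous.
exact: cst_continuous.
Qed.

End Dot.

Section Conj.
Variables (R : realType) (n : nat) (f : 'rV[R]_n -> \bar R) (C : set 'rV[R]_n).
Variables (alpha beta : R).
Local Notation V := 'rV[R]_n.
Hypothesis Hcone : convex_cone C.
Hypothesis Hf : classV f.
Hypothesis Ha : 0 < alpha.
Hypothesis Hab : alpha <= beta.
Hypothesis Hb : forall x, C x ->
  ((alpha * sqnorm x)%:E <= f x /\ f x <= (beta * sqnorm x)%:E)%E.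

Local Notation g := (restr_cone f C).
Local Notation h := (cvx_conj (restr_cone f C)).
Definition fr (x : V) := fine (f x).

Lemma C0 : C 0.
Proof.
case: Hcone => [[x Cx] [_ Hs]].
by have := Hs 0 x (lexx _) Cx; rewrite scale0r.
Qed.

Lemma CZ (l : R) x : 0 <= l -> C x -> C (l *: x).
Proof. by case: Hcone => _ [_ Hs]; apply: Hs. Qed.

Lemma f_fin x : C x -> f x = (fr x)%:E.
Proof.
move=> /Hb; rewrite /fr; case: (f x) => [r| |] //=.
  by move=> [_]; rewrite leye_eq.
by move=> [] ; rewrite leeNy_eq.
Qed.

Lemma fr_bounds x : C x -> alpha * sqnorm x <= fr x <= beta * sqnorm x.
Proof. by move=> Cx; have := Hb Cx; rewrite (f_fin Cx) !lee_fin => -[-> ->]. Qed.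

Lemma elemC y x : C x -> ((dotp y x)%:E - g x)%E = (dotp y x - fr x)%:E.
Proof.
move=> Cx; rewrite /restr_cone /cone_indicator asboolT // adde0 (f_fin Cx) //.
Qed.

Lemma elemN y x : ~ C x -> ((dotp y x)%:E - g x)%E = -oo%E.
Proof.
move=> Cx; rewrite /restr_cone /cone_indicator asboolF // addey //.
case: Hf => _ [_ [[_ H0] _]]; apply/eqP => E; have := H0 x; rewrite E.
by [].
Qed.

Lemma conj_le y (M : \bar R) :
  (forall x, C x -> ((dotp y x - fr x)%:E <= M)%E) -> (h y <= M)%E.
Proof.
move=> H; apply: ge_ereal_sup => _ [x _ <-].
have [Cx|nCx] := pselect (C x); first by rewrite elemC // H.
by rewrite elemN // leNye.
Qed.

Lemma conj_ge y x : C x -> ((dotp y x - fr x)%:E <= h y)%E.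
Proof. by move=> Cx; apply: ereal_sup_ubound; exists x => //; rewrite elemC. Qed.

Lemma h_ub y : (h y <= (sqnorm y / (4 * alpha))%:E)%E.
Proof.
apply: conj_le => x Cx; rewrite lee_fin.
apply: le_trans (young_ineq x y Ha).
by rewrite lerB // (andP (fr_bounds Cx)).1.
Qed.

Lemma fr0 : fr 0 = 0.
Proof.
have := fr_bounds C0; rewrite sqnorm0 !mulr0 => /andP [H1 H2].
by apply/eqP; rewrite eq_le H1 H2.
Qed.

Lemma h_ge0 y : (0 <= h y)%E.
Proof.
have := conj_ge y C0; rewrite fr0 dotpC dotp0l subr0.
by [].
Qed.

Definition hr y := fine (h y).

Lemma h_fin y : h y = (hr y)%:E.
Proof.
have := h_ge0 y; have := h_ub y; rewrite /hr; case: (h y) => //.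
Qed.

Lemma hr_le y (M : R) : (forall x, C x -> dotp y x - fr x <= M) -> hr y <= M.
Proof.
move=> H; rewrite -lee_fin -h_fin; apply: conj_le => x Cx; rewrite lee_fin; exact: H.
Qed.

Lemma hr_ge y x : C x -> dotp y x - fr x <= hr y.
Proof. by move=> Cx; rewrite -lee_fin -h_fin; exact: conj_ge. Qed.

Lemma hr_ge0 y : 0 <= hr y.
Proof. by rewrite -lee_fin -h_fin h_ge0. Qed.

Lemma hr_ub y : hr y <= sqnorm y / (4 * alpha).
Proof. by rewrite -lee_fin -h_fin h_ub. Qed.


Lemma fr_hom (l : R) z : 0 <= l -> C z -> fr (l *: z) = l ^+ 2 * fr z.
Proof.
move=> l0 Cz; case: Hf => _ [_ [_ Hh]].
by rewrite /fr Hh // (f_fin Cz).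
Qed.

Lemma hr_homle (l : R) y : 0 < l -> hr (l *: y) <= l ^+ 2 * hr y.
Proof.
move=> l0; apply: hr_le => x Cx.
have Cz : C (l^-1 *: x) by apply: CZ => //; rewrite invr_ge0 ltW.
have xz : x = l *: (l^-1 *: x) by rewrite scalerA divff ?scale1r // gt_eqF.
rewrite xz (fr_hom (ltW l0) Cz) dotpZl dotpZr mulrA -expr2 -mulrBr.
by apply: ler_wpM2l; [exact: sqr_ge0 | exact: hr_ge].
Qed.

Lemma hr0 : hr 0 = 0.
Proof.
apply/eqP; rewrite eq_le hr_ge0 andbT.
by apply: le_trans (hr_ub 0) _; rewrite sqnorm0 mul0r.
Qed.

Lemma hr_hom (l : R) y : 0 <= l -> hr (l *: y) = l ^+ 2 * hr y.
Proof.
rewrite le_eqVlt => /predU1P [<-|l0].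
  by rewrite scale0r hr0 expr0n /= mul0r.
apply/eqP; rewrite eq_le hr_homle //=.
have li : 0 < l^-1 by rewrite invr_gt0.
have := hr_homle (l *: y) li; rewrite scalerA mulVf ?gt_eqF // scale1r.
move=> /(ler_wpM2l (sqr_ge0 l)); rewrite mulrA -exprMn mulfV ?gt_eqF //.
by rewrite expr1n mul1r.
Qed.

Lemma h_classV : classV h.
Proof.
split; last split; last split.
- rewrite /ext_closed; have -> : epigraph h = \bigcap_(x in C) [set p : V * R | dotp p.1 x - p.2 <= fr x].
    rewrite predeqE => p; rewrite /epigraph /= h_fin lee_fin; split.
      move=> Hp x Cx /=; have := hr_ge p.1 Cx; lra.
    move=> Hp; apply: hr_le => x Cx; have := Hp x Cx => /=; lra.
  apply: closed_bigI => x Cx.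
  apply: (preimage_closed (f := fun p : V * R => dotp p.1 x - p.2)
           (D := [set r | r <= fr x])); last exact: closed_le.
  move=> p _; apply: (continuousB (f := fun p : V * R => dotp p.1 x) (g := snd)); last exact: cvg_snd.
  apply: (continuous_comp (f := fst) (g := fun v => dotp v x)).
    exact: cvg_fst.
  exact: dotp_cont.
- move=> p q; rewrite /epigraph /= !h_fin !lee_fin => Hp Hq t /andP [t0 t1].
  rewrite /= h_fin lee_fin; apply: hr_le => x Cx; rewrite dotpDl !dotpZl.
  have := hr_ge p.1 Cx; have := hr_ge q.1 Cx; nra.
- by split; [rewrite h_fin hr0 | exact: h_ge0].
- by move=> l y l0; rewrite !h_fin hr_hom.
Qed.


Lemma hr_lb y u : C u -> 0 < sqnorm u -> 0 < dotp y u ->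
  dotp y u ^+ 2 / (4 * beta * sqnorm u) <= hr y.
Proof.
move=> Cu su yu.
have b0 : 0 < beta by apply: lt_le_trans Hab.
set p := dotp y u; set s := sqnorm u.
set t := p / (2 * beta * s).
have t0 : 0 <= t by rewrite /t divr_ge0 // ?ltW // !mulr_gt0.
have Cx : C (t *: u) by exact: CZ.
have H1 := hr_ge y Cx.
have H2 := (andP (fr_bounds Cx)).2.
rewrite dotpZr sqnormZ -/p -/s in H1 H2.
have E : t * p - beta * (t ^+ 2 * s) = p ^+ 2 / (4 * beta * s).
  by rewrite /t; field; rewrite !gt_eqF.
rewrite -E; apply: le_trans H1; lra.
Qed.

End Conj.

Lemma sqnorm_cont (R : realType) (n : nat) : continuous (@sqnorm R n).
Proof.
apply: cont_sum => i v; apply: continuousM; exact: coord_continuous.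
Qed.

Lemma fin_min (R : realType) (T : eqType) (s : seq T) (v : T -> R) :
  exists c, 0 < c /\ forall p, p \in s -> 0 < v p -> c <= v p.
Proof.
elim: s => [|a s [c [c0 Hc]]]; first by exists 1.
case: (ltP 0 (v a)) => va.
  exists (Num.min (v a) c); split; first by rewrite lt_min va c0.
  move=> p; rewrite in_cons => /orP [/eqP ->|ps] vp; first by rewrite ge_min lexx.
  by rewrite ge_min Hc // orbT.
exists c; split => // p; rewrite in_cons => /orP [/eqP ->|ps] vp; last exact: Hc.
by move: va; rewrite leNgt vp.
Qed.

Section Key.
Variables (R : realType) (n : nat) (C D : set 'rV[R]_n).
Local Notation V := 'rV[R]_n.
Hypothesis HC : convex_cone C.
Hypothesis HD : convex_cone D.
Hypothesis Hpol : neg_polar C `&` closure D = [set 0].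

Let K := closure D `&` [set y : V | sqnorm y = 1].

Lemma K_compact : compact K.
Proof.
apply: (@subclosed_compact _ K [set v : V | forall i, `[(-1 : R), 1]%classic (v ord0 i)]).
- apply: closedI; first exact: closed_closure.
  apply: (preimage_closed (f := @sqnorm R n) (D := [set 1])).
    by move=> v _; exact: sqnorm_cont.
  exact: closed_eq.
- by apply: (@rV_compact R n (fun=> `[(-1 : R), 1]%classic)) => i; exact: segment_compact.
- move=> v [_ /= v1] i /=.
  have : v ord0 i * v ord0 i <= 1.
    rewrite -v1 /sqnorm /dotp (bigD1 i) //= lerDl sumr_ge0 // => j _.
    by rewrite -expr2 sqr_ge0.
  by rewrite in_itv /=; move=> H; apply/andP; split; nra.
Qed.

Lemma key : exists c : R, 0 < c /\ forall y, D y -> 0 < sqnorm y ->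
  exists u, C u /\ 0 < sqnorm u /\ 0 < dotp y u /\
    c * sqnorm y * sqnorm u <= dotp y u ^+ 2.
Proof.
pose I := (V * R)%type.
pose Dc : set I := [set p | C p.1 /\ 0 < p.2 /\ 0 < sqnorm p.1].
pose F : I -> set V := fun p => [set z | p.2 < dotp z p.1].
have Fo : forall i, Dc i -> open (F i).
  move=> i _; have := (continuousP (fun z : V => dotp z i.1)).1 (@dotp_cont R n i.1).
  by move=> /(_ _ (@open_gt R i.2)).
have Kc : K `<=` cover Dc F.
  move=> y [Dy y1].
  have [x [Cx xy]] : exists x, C x /\ 0 < dotp x y.
    apply: contrapT => Hn.
    have : (neg_polar C `&` closure D) y.
      split => //; move=> x Cx; rewrite leNgt; apply/negP => H; apply: Hn.
      by exists x.
    rewrite Hpol => /= y0; move: y1; rewrite y0 /= sqnorm0 => /eqP.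
    by rewrite eq_sym oner_eq0.
  have sx : 0 < sqnorm x.
    rewrite lt_def sqnorm_ge0 andbT; apply/eqP => /(sqnorm_eq0_dotp y) E.
    by move: xy; rewrite E ltxx.
  exists (x, dotp y x / 2); first by split => //=; split => //; rewrite dotpC divr_gt0.
  by rewrite /F /= dotpC; move: xy; lra.
have [D' sD' cov] : finite_subset_cover Dc F K.
  by move: K_compact; rewrite compact_cover; apply.
have [c [c0 Hc]] := @fin_min R _ (finmap.enum_fset D') (fun p : I => p.2 ^+ 2 / sqnorm p.1).
exists c; split => // y Dy sy.
set s := Num.sqrt (sqnorm y).
have s0 : 0 < s by rewrite sqrtr_gt0.
set z := s^-1 *: y.
have yz : y = s *: z by rewrite /z scalerA divff ?scale1r // gt_eqF.
have Kz : K z.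
  split.
    apply: subset_closure; case: HD => _ [_ HZ]; apply: HZ => //.
    by rewrite invr_ge0 ltW.
  rewrite /= /z sqnormZ exprVn sqr_sqrtr ?sqnorm_ge0 // mulVf // gt_eqF //.
have [p D'p zp] := cov z Kz.
have := sD' p D'p; rewrite inE => -[Cu [e0 su]].
have := Hc p D'p (divr_gt0 (exprn_gt0 2 e0) su).
move=> cle.
exists p.1; split => //; split => //.
have zu : 0 < dotp z p.1 by apply: lt_trans zp.
rewrite yz dotpZl sqnormZ exprMn sqr_sqrtr ?sqnorm_ge0 //; split.
  by rewrite mulr_gt0.
rewrite -[sqnorm y * _]mulrC.
have : c * sqnorm p.1 <= p.2 ^+ 2 by rewrite -ler_pdivlMr.
move=> H; have : p.2 ^+ 2 <= dotp z p.1 ^+ 2.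
  by rewrite lerXn2r // ?nnegrE ltW // (lt_trans e0).
have z1 : sqnorm z = 1 by case: Kz.
rewrite z1 mul1r; have := sqnorm_ge0 y; nra.
Qed.

End Key.

Unset Implicit Arguments.

Theorem theorem1 (R : realType) (n : nat) (f : 'rV[R]_n -> \bar R)
  (C D : set 'rV[R]_n) :
  classV f -> convex_cone C -> convex_cone D -> posdef_wrt f C ->
  neg_polar C `&` closure D = [set 0] ->
  classV (cvx_conj (restr_cone f C)) /\ posdef_wrt (cvx_conj (restr_cone f C)) D.
Proof.
move=> Hf HC HD [alpha [beta [Ha [Hab Hb]]]] Hpol.
split; first exact: (h_classV HC Hf Ha Hb).
have b0 : 0 < beta by apply: lt_le_trans Hab.
have [c [c0 Hc]] := key HD Hpol.
exists (Num.min (c / (4 * beta)) (4 * alpha)^-1), (4 * alpha)^-1.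
split; first by rewrite lt_min !divr_gt0 ?invr_gt0 ?mulr_gt0.
split; first by rewrite ge_min lexx orbT.
move=> y Dy; split; last first.
  by apply: le_trans (h_ub Hf Ha Hb y) _; rewrite lee_fin mulrC.
rewrite (h_fin HC Hf Ha Hb) lee_fin.
have := sqnorm_ge0 y; rewrite le_eqVlt => /predU1P [<-|sy].
  by rewrite mulr0 (hr_ge0 HC Hf Ha Hb).
have [u [Cu [su [yu H]]]] := Hc y Dy sy.
have L := hr_lb HC Hf Ha Hab Hb Cu su yu.
apply: le_trans L.
apply: (@le_trans _ _ (c / (4 * beta) * sqnorm y)).
  by rewrite ler_wpM2r ?sqnorm_ge0 // ge_min lexx.
have E : c / (4 * beta) * sqnorm y = (c * sqnorm y * sqnorm u) / (4 * beta * sqnorm u).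
  by field; rewrite !gt_eqF.
by rewrite E ler_wpM2r // invr_ge0 ltW // !mulr_gt0.
Qed.
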